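(* Let $n\ge 1$ and let $B$ be the $n\times n$ upper bidiagonal matrix with diagonal entries $B_{kk}=k^2$ for $k=1,\ldots,n$, superdiagonal entries $B_{k,k+1}=-(k+1)(n-k)$ for $k=1,\ldots,n-1$, and all other entries zero. Let $M=[m_{kj}]$ be the $n\times n$ lower-triangular matrix whose entries are $$m_{kj}=\frac{(j+1)_{k-j}\,(n-k+1)_{k-j}}{(2j+1)_{k-j}\,(k-j)!}\quad\text{for } k\ge j,\qquad m_{kj}=0\quad\text{for } k<j,$$ where $(x)_m=x(x+1)\cdots(x+m-1)$ (with $(x)_0=1$). Then $S=M^T$ diagonalizes $B$, namely $S$ is invertible and $SBS^{-1}=\Lambda=\mathrm{Diag}(1^2,2^2,\ldots,n^2)$.
   Context: $(x)_m$ denotes the (rising) Pochhammer symbol. In the paper, $B=VP^{-2}V^{-1}$ where $P$ is the $n\times n$ matrix with $P_{ij}=1/i$ for $j\ge n-i+1$ and $0$ otherwise, and $V_{ij}=(-1)^{i-j}\binom{i-1}{j-1}$ for $i\ge j$; the statement above only concerns the explicit bidiagonal $B$. *)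

(* Defs.v *)
From HB Require Import structures.
From mathcomp Require Import all_boot all_order all_algebra.
Set Implicit Arguments. Unset Strict Implicit. Unset Printing Implicit Defensive.
Import Order.TTheory GRing.Theory Num.Theory.
Local Open Scope ring_scope.

Definition pochhammer {R : numFieldType} (x : R) (m : nat) : R :=
  \prod_(i < m) (x + i%:R).

(* Indices are 0-based: row i : 'I_n corresponds to k = i+1 of the paper. *)
Definition Bmat {R : numFieldType} (n : nat) : 'M[R]_n :=
  \matrix_(i < n, j < n)
    if (j == i :> nat) then (i.+1 ^ 2)%:R
    else if (j == i.+1 :> nat) then - ((i.+2)%:R * (n - i.+1)%:R)
    else 0.

(* m_{kj} = (j+1)_{k-j} (n-k+1)_{k-j} / ((2j+1)_{k-j} (k-j)!) for k >= j, else 0.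
   With k = i+1, j = j'+1: j+1 = j'+2, n-k+1 = n-i, 2j+1 = 2j'+3, k-j = i-j'. *)
Definition Mmat {R : numFieldType} (n : nat) : 'M[R]_n :=
  \matrix_(i < n, j < n)
    if (j <= i)%N then
      pochhammer (j.+2)%:R (i - j) * pochhammer (n - i)%:R (i - j)
      / (pochhammer (j.*2.+3)%:R (i - j) * ((i - j)`!)%:R)
    else 0.

Definition Lambda {R : numFieldType} (n : nat) : 'M[R]_n :=
  diag_mx (\row_(i < n) (i.+1 ^ 2)%:R).

(* Main.v *)
Require Import Defs.
From HB Require Import structures.
From mathcomp Require Import all_boot all_order all_algebra.
From mathcomp Require Import ring zify.
Import Order.TTheory GRing.Theory Num.Theory.
Local Open Scope ring_scope.

Section S.
Variable R : numFieldType.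

Lemma poch_gt0 (x : R) m : 0 < x -> 0 < pochhammer x m.
Proof.
move=> hx; rewrite /pochhammer; apply: prodr_gt0 => i _.
by apply: ltr_wpDr => //; rewrite ler0n.
Qed.

Lemma pochS (x : R) m : pochhammer x m.+1 = pochhammer x m * (x + m%:R).
Proof. by rewrite /pochhammer big_ord_recr. Qed.

Lemma pochSl (x : R) m : pochhammer x m.+1 = x * pochhammer (x + 1) m.
Proof.
rewrite /pochhammer big_ord_recl; congr (_ * _).
  by rewrite addr0.
by apply: eq_bigr => i _; rewrite lift0 -addrA -natr1 [1 + _]addrC.
Qed.

Definition mf (n k j : nat) : R :=
  if (j <= k)%N then
    pochhammer (j.+2)%:R (k - j) * pochhammer (n - k)%:R (k - j)
    / (pochhammer (j.*2.+3)%:R (k - j) * ((k - j)`!)%:R)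
  else 0.

Lemma mf_rec n k j : (j <= k)%N -> (k.+1 < n)%N ->
  ((k.+2 ^ 2)%:R - (j.+1 ^ 2)%:R) * mf n k.+1 j
  = (k.+2)%:R * (n - k.+1)%:R * mf n k j.
Proof.
move=> hjk hkn; rewrite /mf hjk (leqW hjk).
have [d hd] : exists d, k = (j + d)%N by exists (k - j)%N; rewrite subnKC.
subst k.
have -> : ((j + d).+1 - j = d.+1)%N by lia.
have -> : ((j + d) - j = d)%N by lia.
have -> : (n - (j + d))%N = (n - (j + d).+1).+1 by lia.
set m := (n - (j + d).+1)%N.
rewrite pochS pochSl pochS factS -[m.+1]addn1 natrD.
have h1 : pochhammer (j.*2.+3)%:R d != 0 :> R by rewrite gt_eqF // poch_gt0 // ltr0n.
have h2 : (d`!)%:R != 0 :> R by rewrite pnatr_eq0 -lt0n fact_gt0.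
have h3 : (j.*2.+3)%:R + d%:R != 0 :> R by rewrite -natrD pnatr_eq0.
have h4 : (d.+1)%:R != 0 :> R by rewrite pnatr_eq0.
clearbody m; move: h1 h3; rewrite -!mul2n => h1 h3.
field; rewrite ?h1 ?h2 ?h3 ?h4 //=.
have -> : (3:R) + 2 * j%:R + d%:R = (3 + 2*j + d)%N%:R .
  by rewrite !natrD addr0 -mulr2n mulr_natl.
by rewrite pnatr_eq0 addrC natr1 pnatr_eq0.
Qed.

Lemma key n : (Mmat n)^T *m Bmat n = Lambda n *m (Mmat n)^T :> 'M[R]_n.
Proof.
apply/matrixP => j k; rewrite /Lambda mul_diag_mx [RHS]mxE [X in _ = _ * X]mxE.
rewrite [X in _ = _ * X]mxE mxE -/(mf n k j).
case: k => [[|k] hk].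
  rewrite (bigD1 (Ordinal hk)) //= big1 ?addr0; last first.
    move=> l hl; rewrite !mxE.
    have -> : (0 == l :> nat) = false by apply/negbTE; rewrite eq_sym; apply: contra hl => /eqP h; apply/eqP/val_inj.
    by rewrite mulr0.
  rewrite !mxE /= -/(mf n 0 j).
  rewrite /mf; case: ifP => h; last by rewrite mul0r mulr0.
  have /eqP hj : (j == 0 :> nat) by rewrite -leqn0.
  by rewrite hj mulrC.
rewrite mxE (bigD1 (Ordinal hk)) //= (bigD1 (Ordinal (ltnW hk))) /=; last first.
  by rewrite -val_eqE /= ltn_eqF.
rewrite big1 ?addr0; last first.
  move=> l /andP [hl1 hl2]; rewrite !mxE.
  have -> : (k.+1 == l :> nat) = false.
    by apply/negbTE; rewrite eq_sym; apply: contra hl1 => /eqP h; apply/eqP/val_inj.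
  have -> : (k.+1 == l.+1 :> nat) = false.
    by apply/negbTE; rewrite eqSS eq_sym; apply: contra hl2 => /eqP h; apply/eqP/val_inj.
  by rewrite mulr0.
rewrite !mxE /= eqxx (gtn_eqF (ltnSn k)) -/(mf n k.+1 j) -/(mf n k j).
case: (leqP j k) => hjk.
  by rewrite mulrN [mf n k j * _]mulrC -(mf_rec _ _ _ hjk hk); ring.
have -> : mf n k j = 0 by rewrite /mf leqNgt hjk.
rewrite mul0r addr0 mulrC.
case: (eqVneq (j : nat) k.+1) => [-> //|hne].
have -> : mf n k.+1 j = 0 by rewrite /mf leqNgt ltn_neqAle eq_sym hne hjk.
by rewrite !mulr0.
Qed.
End S.

Theorem theorem1 (R : numFieldType) (n : nat) (hn : (1 <= n)%N) :
  let S : 'M[R]_n := (Mmat n)^T in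
  S \in unitmx /\ S *m Bmat n *m invmx S = Lambda n.
Proof.
move=> S.
have hU : S \in unitmx.
  rewrite unitmxE /S det_tr det_trig; last first.
    apply/is_trig_mxP => i j hij; rewrite mxE leqNgt hij //.
  rewrite big1 ?unitr1 // => i _.
  rewrite mxE leqnn subnn /pochhammer !big_ord0 fact0 !mul1r invr1 //.
split => //.
by rewrite key -mulmxA mulmxV // mulmx1.
Qed.
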